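(* Let $\mathcal{F}$ be a finite field, $n$ a positive integer not divisible by the characteristic of $\mathcal{F}$, $\omega\in\mathcal{F}$ a primitive $n$-th root of unity, and $F_n=(\omega^{jk})_{0\le j,k\le n-1}$ with rows $e_0,\dots,e_{n-1}$. Let $r$ be an integer with $\frac n2<r\le n$. Then the code generated by the $(2(n-r)+1)\times n$ matrix with rows $e_r,e_{r+1},\dots,e_{n-1},e_0,e_1,\dots,e_{n-r}$ is a linear complementary dual maximum distance separable code, with parameters $[n,\,2(n-r)+1,\,2r-n]$; its dual code is generated by the remaining rows $e_{n-r+1},\dots,e_{r-1}$.
   Context: Duals are with respect to the standard bilinear form $x\cdot y=\sum x_iy_i$. A code $\mathcal{C}$ is LCD if $\mathcal{C}\cap\mathcal{C}^\perp=0$. An $[n,k,d]$ linear code is mds if $d=n-k+1$. *)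

(* Defs.v *)
From HB Require Import structures.
From mathcomp Require Import all_boot all_order all_algebra all_field.
Set Implicit Arguments. Unset Strict Implicit. Unset Printing Implicit Defensive.
Import GRing.Theory.
Local Open Scope ring_scope.

(* Codes are row spaces of matrices over a field (mxalgebra, (_ <= _)%MS). *)
Section Codes.
Variable F : fieldType.
Variable n : nat.

Definition dotv (x y : 'rV[F]_n) : F := \sum_(i < n) x 0 i * y 0 i.

Definition wt (x : 'rV[F]_n) : nat := #|[set i : 'I_n | x 0 i != 0]|.

Definition in_dual m (C : 'M[F]_(m, n)) (v : 'rV[F]_n) : Prop :=
  forall u : 'rV[F]_n, (u <= C)%MS -> dotv u v = 0.

Definition is_LCD m (C : 'M[F]_(m, n)) : Prop :=
  forall v : 'rV[F]_n, (v <= C)%MS -> in_dual C v -> v = 0.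

Definition is_min_dist m (C : 'M[F]_(m, n)) (d : nat) : Prop :=
  (forall v : 'rV[F]_n, (v <= C)%MS -> v != 0 -> (d <= wt v)%N) /\
  (exists2 v : 'rV[F]_n, (v <= C)%MS /\ v != 0 & wt v = d).

Definition has_params m (C : 'M[F]_(m, n)) (k d : nat) : Prop :=
  \rank C = k /\ is_min_dist C d.

Definition is_mds m (C : 'M[F]_(m, n)) : Prop :=
  exists d, is_min_dist C d /\ d = (n - \rank C + 1)%N.
End Codes.

Definition fourier_row (F : fieldType) (n : nat) (w : F) (j : nat) : 'rV[F]_n :=
  \row_(k < n) w ^+ (j * k).

(* matrix whose rows are e_j for j in the index set S (other rows zero);
   it generates the same code as the matrix of the rows e_j, j in S. *)
Definition rows_mx (F : fieldType) (n : nat) (w : F) (S : pred nat) : 'M[F]_n :=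
  \matrix_(i < n) (if S i then fourier_row n w i else 0).

(* Main.v *)
Require Import Defs.
From HB Require Import structures.
From mathcomp Require Import all_boot all_order all_algebra all_field.
From mathcomp Require Import zify.
Import GRing.Theory.
Set Implicit Arguments. Unset Strict Implicit. Unset Printing Implicit Defensive.
Local Open Scope ring_scope.

Lemma arith1 n i j : (i < n)%N -> (j < n)%N -> (n %| i + j)%N = (j == (n - i) %% n)%N.
Proof.
move=> hi hj; rewrite /dvdn.
have -> : ((n - i) %% n = if i == 0 then 0 else n - i)%N.
  case: eqP => [->|/eqP i0]; first by rewrite subn0 modnn.
  by rewrite modn_small //; lia.
case: (ltnP (i + j) n) => h.
  rewrite modn_small //; apply/eqP/eqP; case: eqP; lia.
have -> : (i + j = (i + j - n) + n)%N by lia.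
rewrite modnDr modn_small; last by lia.
apply/eqP/eqP; case: eqP; lia.
Qed.
Lemma modsub n j : (j < n)%N -> ((n - j) %% n = if j == 0 then 0 else n - j)%N.
Proof.
move=> hj; case: eqP => [->|/eqP i0]; first by rewrite subn0 modnn.
by rewrite modn_small //; lia.
Qed.
Lemma cinv n j : (j < n)%N -> ((n - (n - j) %% n) %% n = j)%N.
Proof.
move=> hj; rewrite (@modsub _ _ hj); case: (j =P 0%N) => [->|j0].
  by rewrite subn0 modnn.
by rewrite modn_small; lia.
Qed.

Section Aux.
Variable F : fieldType.
Variable n : nat.
Variable w : F.
Hypothesis hn : (0 < n)%N.
Hypothesis hw : n.-primitive_root w.

Local Notation E := (fourier_row n w).

Lemma EnD j : E (j + n) = E j.
Proof.
apply/rowP => k; rewrite !mxE mulnDl exprD (exprM w n) (prim_expr_order hw).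
by rewrite expr1n mulr1.
Qed.

Lemma w_neq0 : w != 0.
Proof.
apply/eqP => w0; move: (prim_expr_order hw); rewrite w0 expr0n gtn_eqF //.
by move/eqP; rewrite eq_sym oner_eq0.
Qed.

Definition Rm K s : 'M[F]_(K, n) := \matrix_(i < K) E (i + s).

Lemma Rm_val K s (x : 'rV[F]_K) (k : 'I_n) :
  (x *m Rm K s) 0 k = w ^+ (k * s) * (rVpoly x).[w ^+ k].
Proof.
rewrite !mxE horner_poly mulr_sumr; apply: eq_bigr => i _.
rewrite valK !mxE mulrCA -exprM -exprD; congr (_ * (_ ^+ _)); lia.
Qed.

Lemma roots_uniq (Z : {set 'I_n}) : uniq [seq w ^+ (val k) | k <- enum Z].
Proof.
rewrite map_inj_in_uniq ?enum_uniq // => a b _ _ /eqP.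
by rewrite (eq_prim_root_expr hw) !modn_small ?ltn_ord // => /eqP /val_inj.
Qed.

Lemma zeros_bound K s (x : 'rV[F]_K) : x *m Rm K s != 0 ->
  (#|[set k : 'I_n | (x *m Rm K s) 0%R k == 0%R]| < K)%N.
Proof.
set v := x *m Rm K s; set q := rVpoly x => vn0.
have qn0 : q != 0.
  apply: contraNneq vn0 => q0; apply/eqP/rowP => k.
  by rewrite /v Rm_val -/q q0 horner0 mulr0 mxE.
apply: (leq_trans _ (size_poly _ _)).
rewrite cardE -(size_map (fun k : 'I_n => w ^+ k)).
apply: max_poly_roots qn0 _ (roots_uniq _).
apply/allP => z /mapP [k]; rewrite mem_enum inE => /eqP vk ->.
move: vk; rewrite /v Rm_val -/q => /eqP; rewrite mulf_eq0 expf_eq0 (negbTE w_neq0) andbF /=.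
by [].
Qed.

Lemma Rm_free K s : (K <= n)%N -> row_free (Rm K s).
Proof.
move=> hK; rewrite -kermx_eq0; apply/eqP/row_matrixP => i; rewrite row0.
set x := row i (kermx (Rm K s)).
have x0 : x *m Rm K s = 0 by apply/sub_kermxP; rewrite row_sub.
set q := rVpoly x.
have q0 : q = 0.
  apply: (@roots_geq_poly_eq0 _ _ [seq w ^+ (val k) | k <- enum [set: 'I_n]]).
  - apply/allP => z /mapP [k] _ ->; rewrite /root.
    have := congr1 (fun v : 'rV[F]_n => v 0 k) x0; rewrite /= Rm_val mxE -/q => /eqP.
    by rewrite mulf_eq0 expf_eq0 (negbTE w_neq0) andbF.
  - exact: roots_uniq.
  - rewrite size_map -cardE cardsT card_ord.
    exact: leq_trans (size_poly _ _) hK.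
apply/rowP => j; have := congr1 (fun p : {poly F} => p`_j) q0.
by rewrite coef_rVpoly_ord coef0 !mxE.
Qed.

Lemma dotv_mul (u : 'rV[F]_n) m (c : 'rV[F]_m) (A : 'M_(m, n)) :
  dotv u (c *m A) = \sum_(j < m) c 0 j * dotv u (row j A).
Proof.
rewrite /dotv; under eq_bigr do rewrite mxE mulr_sumr.
rewrite exchange_big /=; apply: eq_bigr => j _; rewrite mulr_sumr.
by apply: eq_bigr => k _; rewrite !mxE mulrCA.
Qed.

Lemma dotvC (u v : 'rV[F]_n) : dotv u v = dotv v u.
Proof. by apply: eq_bigr => k _; rewrite mulrC. Qed.

Lemma dotv0 (u : 'rV[F]_n) : dotv u 0 = 0.
Proof. by rewrite /dotv big1 // => k _; rewrite mxE mulr0. Qed.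

Lemma dotE i j : dotv (E i) (E j) = if (n %| i + j)%N then n%:R else 0.
Proof.
rewrite /dotv (eq_bigr (fun k : 'I_n => (w ^+ (i + j)) ^+ k)); last first.
  by move=> k _; rewrite !mxE -exprD -mulnDl exprM.
rewrite (prim_order_dvd hw); case: ifP => [/eqP -> | z1].
  by under eq_bigr do rewrite expr1n; rewrite sumr_const card_ord.
have := subrX1 (w ^+ (i + j)) n.
rewrite -exprM mulnC exprM (prim_expr_order hw) expr1n subrr => /esym /eqP.
by rewrite mulf_eq0 subr_eq0 z1 /= => /eqP.
Qed.








Lemma rows_row (P : pred nat) (j : 'I_n) : row j (rows_mx n w P) = if P j then E j else 0.
Proof. by rewrite rowK. Qed.

Lemma E_sub (P : pred nat) j : (j < n)%N -> P j -> (E j <= rows_mx n w P)%MS.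
Proof.
move=> hj Pj; have := row_sub (Ordinal hj) (rows_mx n w P).
by rewrite rows_row /= Pj.
Qed.

Definition Mf := Rm n 0.

Lemma unitM : Mf \in unitmx.
Proof. by rewrite -row_free_unit; apply: Rm_free. Qed.

Lemma rowMf (j : 'I_n) : row j Mf = E j.
Proof. by rewrite rowK addn0. Qed.

Hypothesis hn0 : (n%:R : F) != 0.

Lemma coef0 (v : 'rV[F]_n) (j : 'I_n) :
  dotv (E ((n - j) %% n)) v = 0 -> (v *m invmx Mf) 0 j = 0.
Proof.
set c := v *m invmx Mf.
rewrite -{1}[v](mulmxKV unitM) -/c dotv_mul (bigD1 j) //= big1; last first.
  move=> k kj; rewrite rowMf dotE arith1 ?ltn_pmod //.
  case: eqP; last by rewrite mulr0.
  move=> e; move: kj; rewrite -(inj_eq val_inj) /= e cinv ?ltn_ord //.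
  by rewrite eqxx.
rewrite rowMf dotE arith1 ?ltn_pmod // cinv // eqxx addr0 => /eqP.
by rewrite mulf_eq0 (negbTE hn0) orbF => /eqP.
Qed.

Lemma expand (v : 'rV[F]_n) : v = (v *m invmx Mf) *m Mf.
Proof. by rewrite mulmxKV // unitM. Qed.

End Aux.

Section Main.
Variable F : fieldType.
Variable n : nat.
Variable w : F.
Variable r : nat.
Hypothesis hn : (0 < n)%N.
Hypothesis hw : n.-primitive_root w.
Hypothesis hn0 : (n%:R : F) != 0.
Hypothesis hr1 : (n < 2 * r)%N.
Hypothesis hr2 : (r <= n)%N.

Local Notation E := (fourier_row n w).
Definition PG := fun j => (r <= j < n)%N || (j <= n - r)%N.
Definition PH := fun j => (n - r < j < r)%N.
Local Notation G := (rows_mx n w PG).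
Local Notation H := (rows_mx n w PH).
Local Notation K := (2 * (n - r) + 1)%N.
Local Notation R := (@Rm F n w K r).

Lemma RG : (R :=: G)%MS.
Proof.
apply/eqmxP/andP; split; apply/row_subP => i.
  rewrite rowK; case: (ltnP (i + r) n) => h.
    by apply: E_sub => //; rewrite /PG h leq_addl.
  have := ltn_ord i => hi.
  have -> : (i + r = (i + r - n) + n)%N by lia.
  rewrite EnD //; apply: E_sub; rewrite /PG; lia.
rewrite rows_row; case: ifP => [hP|]; last by rewrite sub0mx.
have hi := ltn_ord i.
case: (leqP r i) => h.
  have hk : (i - r < K)%N by lia.
  have -> : E i = row (Ordinal hk) R by rewrite rowK /=; congr E; lia.
  exact: row_sub.
have hk : (i + n - r < K)%N by move: hP; rewrite /PG; lia.
have -> : E i = row (Ordinal hk) R.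
  by rewrite rowK /= -(EnD hw i); congr E; lia.
exact: row_sub.
Qed.

Lemma rankG : \rank G = K.
Proof. by rewrite -(eqmx_rank (introT eqmxP RG)); apply/eqP; apply: Rm_free => //; lia. Qed.

Lemma memG (v : 'rV[F]_n) : (v <= G)%MS -> exists x, v = x *m R.
Proof. by rewrite -RG => /submxP. Qed.

Lemma wt_zeros (v : 'rV[F]_n) :
  (#|[set k : 'I_n | v 0%R k == 0%R]| + wt v)%N = n.
Proof.
rewrite /wt -[RHS](card_ord n) -(cardsC [set k : 'I_n | v 0%R k == 0%R]).
by congr (_ + _); apply: eq_card => i; rewrite !inE.
Qed.

Lemma lowb (v : 'rV[F]_n) : (v <= G)%MS -> v != 0 -> (2 * r - n <= wt v)%N.
Proof.
move=> /memG [x ->] vn0; have := zeros_bound hn hw vn0.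
have := wt_zeros (x *m R). set a := #|_|. set b := wt _. move=> h1 h2. clear -h1 h2 hr1 hr2. lia.
Qed.

Lemma card_lt m : (m <= n)%N -> #|[set k : 'I_n | (k < m)%N]| = m.
Proof.
move=> hm.
have -> : [set k : 'I_n | (k < m)%N] = widen_ord hm @: [set: 'I_m].
  apply/setP => k; rewrite inE; apply/idP/imsetP => [km | [j _ ->]].
    by exists (Ordinal km) => //; apply: val_inj.
  by rewrite /=; exact: (ltn_ord j).
by rewrite card_imset ?cardsT ?card_ord // => a b /(congr1 val) /= /val_inj.
Qed.

Lemma mindist : is_min_dist G (2 * r - n).
Proof.
split; first exact: lowb.
pose m := (2 * (n - r))%N.
pose s := [seq w ^+ i | i <- iota 0 m].
pose p := \prod_(a <- s) ('X - a%:P).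
have sp : size p = K by rewrite size_prod_XsubC size_map size_iota; lia.
pose x : 'rV[F]_K := poly_rV p.
have xp : rVpoly x = p by rewrite poly_rV_K // sp.
have memS (k : 'I_n) : (w ^+ k \in s) = (k < m)%N.
  apply/mapP/idP => [[i] | km].
    rewrite mem_iota add0n => /andP [_ im] /eqP.
    rewrite (eq_prim_root_expr hw) !modn_small ?ltn_ord //; last by lia.
    by move=> /eqP ->.
  by exists (val k) => //; rewrite mem_iota.
have vz (k : 'I_n) : ((x *m R) 0%R k == 0) = (k < m)%N.
  rewrite Rm_val // xp mulf_eq0 expf_eq0 (negbTE (w_neq0 hn hw)) andbF /=.
  by rewrite -/(root p _) root_prod_XsubC memS.
have wtv : wt (x *m R) = (2 * r - n)%N.
  have := wt_zeros (x *m R).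
  have -> : [set k : 'I_n | (x *m R) 0%R k == 0] = [set k : 'I_n | (k < m)%N].
    by apply/setP => k; rewrite !inE vz.
  rewrite card_lt; [lia | rewrite /m; lia].
exists (x *m R) => //; split.
  by rewrite -RG submxMl.
apply/eqP => v0; move: wtv; rewrite v0 /wt.
have -> : [set i : 'I_n | (0 : 'rV[F]_n) 0%R i != 0] = set0.
  by apply/setP => i; rewrite !inE mxE eqxx.
rewrite cards0; lia.
Qed.

Lemma orth (u v : 'rV[F]_n) : (u <= G)%MS -> (v <= H)%MS -> dotv u v = 0.
Proof.
move=> /submxP [x ->] /submxP [y ->].
rewrite dotv_mul big1 // => j _; rewrite dotvC dotv_mul big1 ?mulr0 // => i _.
rewrite !rows_row; case: ifP => hj; last by rewrite dotvC dotv0 mulr0.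
case: ifP => hi; last by rewrite dotv0 mulr0.
rewrite dotE // arith1 ?ltn_ord // modsub ?ltn_ord //.
case: eqP => [e|]; last by rewrite mulr0.
exfalso; move: e hi hj; rewrite /PG /PH; have := ltn_ord i; have := ltn_ord j.
case: (val j =P 0%N) => [->|jn0] /=; set a := val i; set b := val j; lia.
Qed.

Lemma dualH (v : 'rV[F]_n) : in_dual G v -> (v <= H)%MS.
Proof.
move=> hv; set c := v *m invmx (@Mf F n w).
have cG (j : 'I_n) : PG j -> c 0 j = 0.
  move=> hj; apply: coef0 => //; apply: hv; apply: E_sub; first exact: ltn_pmod.
  move: hj; rewrite modsub ?ltn_ord // /PG; have := ltn_ord j.
  case: (val j =P 0%N) => [->|jn0] /=; set b := val j; lia.
apply/submxP; exists c; rewrite {1}(expand hn hw v) -/c !mulmx_sum_row.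
apply: eq_bigr => j _; rewrite rowMf // rows_row.
case: ifP => hj; first by rewrite /PH in hj; rewrite /PH.
have hG : PG j by move: hj; rewrite /PG /PH; have := ltn_ord j; set b := val j; lia.
by rewrite cG // !scale0r.
Qed.

Lemma lcdG : is_LCD G.
Proof.
move=> v vG hv.
have hc (j : 'I_n) : (v *m invmx (@Mf F n w)) 0 j = 0.
  apply: coef0 => //.
  have hi : ((n - j) %% n < n)%N by exact: ltn_pmod.
  case hP: (PG ((n - j) %% n)); first by apply: hv; apply: E_sub.
  rewrite dotvC; apply: orth => //; apply: E_sub => //.
  by move: hP hi; rewrite /PG /PH; set b := ((n - j) %% n)%N; lia.
rewrite (expand hn hw v); have -> : v *m invmx (@Mf F n w) = 0 by apply/rowP => j; rewrite hc mxE.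
by rewrite mul0mx.
Qed.

End Main.

Unset Implicit Arguments. Set Strict Implicit.

Theorem mainTheorem9 (F : finFieldType) (n : nat) (w : F) (r : nat)
  (hn : (0 < n)%N)
  (hchar : forall p : nat, p \in [pchar F] -> ~~ (p %| n)%N)
  (hw : n.-primitive_root w)
  (hr1 : (n < 2 * r)%N) (hr2 : (r <= n)%N) :
  let G := rows_mx n w (fun j => (r <= j < n)%N || (j <= n - r)%N) in
  let H := rows_mx n w (fun j => (n - r < j < r)%N) in
  [/\ is_LCD G, is_mds G,
      has_params G (2 * (n - r) + 1) (2 * r - n)
    & forall v : 'rV[F]_n, in_dual G v <-> (v <= H)%MS].
Proof.
move=> G H.
have hn0 : (n%:R : F) != 0.
  case: (boolP (n%:R == 0 :> F)) => // h0.
  have [p hp] := natf0_pchar hn h0.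
  by have := hchar p hp; rewrite (dvdn_pcharf hp) h0.
have md : is_min_dist G (2 * r - n) by apply: mindist.
have rk : \rank G = (2 * (n - r) + 1)%N by apply: rankG.
split.
- by apply: lcdG.
- exists (2 * r - n)%N; split; first exact: md.
  rewrite rk; clear -hr1 hr2; lia.
- by split.
- move=> v; split; first by apply: dualH.
  by move=> vH u uG; exact: (orth hn hw hn0 hr1 hr2 uG vH).
Qed.
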